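(* Let $G=(V,E)$ be a simple planar bipartite undirected graph whose edges are each colored Red or Blue, and let $M$ be a perfect matching of $G$ containing an odd number of Red edges. Define the weighted directed graph $H$ on vertex set $V$ as follows: $(u,v)$ is an edge of $H$ if and only if there is $x\in V$ with $\{u,x\}\in M$ and $\{x,v\}\in E\setminus M$; its weight $w(u,v)$ is $0$ if $\{u,x\}$ and $\{x,v\}$ have the same color and $1$ otherwise. Then $G$ has a perfect matching containing an even number of Red edges if and only if $H$ contains a directed cycle of odd total weight.
   Context: A perfect matching is a set of pairwise vertex-disjoint edges covering every vertex. The weight of a directed cycle is the sum of the weights of its edges. (Since $M$ is perfect, for each $u$ the vertex $x$ with $\{u,x\}\in M$ is unique.) *)

(* Defs.v *)
From HB Require Import structures.
From Stdlib Require Import Reals.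
From mathcomp Require Import all_boot.

Set Implicit Arguments.
Unset Strict Implicit.
Unset Printing Implicit Defensive.

Definition simple_graph (V : finType) (E : {set {set V}}) : Prop :=
  forall f, f \in E -> #|f| = 2.

Definition bipartite (V : finType) (E : {set {set V}}) : Prop :=
  exists side : V -> bool,
    forall u v, [set u; v] \in E -> side u != side v.

Definition perfect_matching (V : finType) (E M : {set {set V}}) : Prop :=
  M \subset E /\ forall v : V, #|[set f in M | v \in f]| = 1.

Definition in01 (t : R) : Prop := Rle R0 t /\ Rle t R1.
Definition open01 (t : R) : Prop := Rlt R0 t /\ Rlt t R1.

Definition pdist (p q : R * R) : R :=
  Rmax (Rabs (Rminus (fst p) (fst q))) (Rabs (Rminus (snd p) (snd q))).

Definition cont01 (g : R -> R * R) : Prop :=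
  forall t, in01 t -> forall eps, Rlt R0 eps ->
    exists delta, Rlt R0 delta /\
      forall s, in01 s -> Rlt (Rabs (Rminus s t)) delta ->
        Rlt (pdist (g s) (g t)) eps.

Definition planar (V : finType) (E : {set {set V}}) : Prop :=
  exists (pos : V -> R * R) (crv : V -> V -> R -> R * R),
    injective pos /\
    (forall u v, [set u; v] \in E ->
       [/\ cont01 (crv u v), crv u v R0 = pos u, crv u v R1 = pos v &
           (forall t s, in01 t -> in01 s -> crv u v t = crv u v s -> t = s)] /\
       (forall t, in01 t -> crv v u t = crv u v (Rminus R1 t)) /\
       (forall t w, open01 t -> crv u v t <> pos w)) /\
    (forall u v u' v', [set u; v] \in E -> [set u'; v'] \in E ->
       [set u; v] != [set u'; v'] ->
       forall t s, open01 t -> open01 s -> crv u v t <> crv u' v' s).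

Definition Hedge (V : finType) (E M : {set {set V}}) : rel V :=
  fun u v => [exists x, ([set u; x] \in M) && ([set x; v] \in E :\: M)].

(* weight: 0 if {u,x} and {x,v} have the same colour, 1 otherwise
   (red = set of Red edges, all other edges are Blue).  Since M is a perfect
   matching, x is the unique M-partner of u, so this is well defined. *)
Definition Hweight (V : finType) (E M red : {set {set V}}) (u v : V) : nat :=
  if [exists x, [&& [set u; x] \in M, [set x; v] \in E :\: M &
                    ([set u; x] \in red) != ([set x; v] \in red)]]
  then 1 else 0.

Definition dicycle (V : finType) (h : rel V) (c : seq V) : Prop :=
  [/\ c != [::], uniq c & cycle h c].

Definition cycle_weight (V : finType) (w : V -> V -> nat) (c : seq V) : nat :=
  sumn [seq w p.1 p.2 | p <- zip c (rot 1 c)].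

(* Main.v *)
Require Import Defs.
From mathcomp Require Import all_boot.
Set Implicit Arguments. Unset Strict Implicit. Unset Printing Implicit Defensive.

Lemma set2_card2 (V : finType) (E : {set {set V}}) w x :
  simple_graph E -> [set w; x] \in E -> w != x.
Proof.
move=> sE h; apply/eqP=> ewx; have := sE _ h; rewrite ewx setUid cards1 //.
Qed.

Lemma partner (V : finType) (E N : {set {set V}}) :
  simple_graph E -> perfect_matching E N ->
  exists p : V -> V, (forall w, [set w; p w] \in N) /\
                     (forall w x, [set w; x] \in N -> x = p w).
Proof.
move=> sE [sNE pN].
have uniqN : forall w x y, [set w; x] \in N -> [set w; y] \in N -> x = y.
  move=> w x y hx hy; have /eqP/cards1P[f0 Hf] := pN w.
  have : [set w; y] \in [set f in N | w \in f] by rewrite inE hy set21.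
  have : [set w; x] \in [set f in N | w \in f] by rewrite inE hx set21.
  rewrite Hf !inE => /eqP ex /eqP ey.
  have : x \in [set w; y] by rewrite ey -ex set22.
  case/set2P => // xw.
  have := set2_card2 sE (subsetP sNE _ hx); by rewrite xw eqxx.
have ex : forall w, exists x, [set w; x] \in N.
  move=> w; have /eqP/cards1P[f0 Hf] := pN w.
  have : f0 \in [set f in N | w \in f] by rewrite Hf set11.
  rewrite inE => /andP[f0N wf0].
  have /eqP/cards2P[a [b [_ ef0]]] := sE _ (subsetP sNE _ f0N).
  move: wf0; rewrite ef0 => /set2P [->|->].
    by exists b; rewrite -ef0.
  by exists a; rewrite setUC -ef0.
exists (fun w => odflt w [pick x | [set w; x] \in N]); split.
  move=> w; case: pickP => [x //|H]; have [x hx] := ex w; by rewrite H in hx.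
move=> w x hx; case: pickP => [y hy|H] /=; [exact: uniqN hx hy | by rewrite H in hx].
Qed.

Lemma partner_inv (V : finType) (N : {set {set V}}) (p : V -> V) :
  (forall w, [set w; p w] \in N) -> (forall w x, [set w; x] \in N -> x = p w) ->
  forall w, p (p w) = w.
Proof. by move=> h1 h2 w; apply/esym/h2; rewrite setUC. Qed.

Lemma partner_img (V : finType) (E N : {set {set V}}) (p : V -> V) :
  simple_graph E -> N \subset E ->
  (forall w, [set w; p w] \in N) -> (forall w x, [set w; x] \in N -> x = p w) ->
  N = [set [set w; p w] | w : V].
Proof.
move=> sE sNE h1 h2; apply/setP=> f; apply/idP/imsetP.
  move=> fN; have /eqP/cards2P[a [b [_ ef]]] := sE _ (subsetP sNE _ fN).
  by exists a => //; rewrite ef -(h2 a b) // -ef.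
by case=> w _ ->.
Qed.
Lemma count_red (V : finType) (red : {set {set V}}) (side : V -> bool) (q : V -> V) b :
 (forall w, q (q w) = w) -> (forall w, side (q w) != side w) ->
 #|[set [set w; q w] | w : V] :&: red| =
   \sum_(x | side x == b) ([set x; q x] \in red : nat).
Proof.
move=> qK qs.
set S := [set x | (side x == b) && ([set x; q x] \in red)].
have -> : \sum_(x | side x == b) ([set x; q x] \in red : nat) = #|S|.
  rewrite -sum1_card [RHS]big_mkcond [LHS]big_mkcond /=; apply: eq_bigr => x _.
  by rewrite inE; case: (side x == b); case: ([set x; q x] \in red).
have inj : {in S &, injective (fun x => [set x; q x])}.
  move=> x y; rewrite !inE => /andP[/eqP sx _] /andP[/eqP sy _] exy.
  have : x \in [set y; q y] by rewrite -exy set21.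
  case/set2P => // xqy; have := qs y; by rewrite -xqy sx sy eqxx.
rewrite -(card_in_imset inj); apply: eq_card => f; rewrite !inE.
apply/andP/imsetP.
  case=> /imsetP[w _ ->] fr.
  case sw: (side w == b).
    by exists w => //; rewrite inE sw.
  exists (q w); first by rewrite inE qK setUC fr andbT; move: (qs w) sw; case: (side (q w)); case: (side w); case: (b) => //.
  by rewrite qK setUC.
case=> x; rewrite inE => /andP[_ xr] ->; split => //; exact: imset_f.
Qed.
Lemma odd_sum (I : Type) (r : seq I) (P : pred I) (F : I -> nat) :
  odd (\sum_(i <- r | P i) F i) = \big[addb/false]_(i <- r | P i) odd (F i).
Proof. exact: (big_morph odd oddD). Qed.

Lemma zip_path (T : eqType) (f : T -> T) x s y :
  path (frel f) x (rcons s y) -> zip (x :: s) (rcons s y) = [seq (z, f z) | z <- x :: s].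
Proof.
elim: s x => [|z s IH] x /=.
  by rewrite andbT => /eqP ->.
by case/andP => /eqP <- h; rewrite (IH _ h).
Qed.

Lemma zip_frel (T : eqType) (f : T -> T) (c : seq T) :
  cycle (frel f) c -> zip c (rot 1 c) = [seq (y, f y) | y <- c].
Proof. case: c => // x s; rewrite /= rot1_cons; exact: zip_path. Qed.

Lemma weight_frel (T : eqType) (f : T -> T) (w : T -> T -> nat) (c : seq T) :
  cycle (frel f) c -> sumn [seq w p.1 p.2 | p <- zip c (rot 1 c)] =
   \sum_(y <- c) w y (f y).
Proof. by move=> h; rewrite (zip_frel h) -map_comp sumnE big_map. Qed.

Lemma odd_orbit (V : finType) (f : V -> V) (g : V -> nat) :
  injective f -> forall n (S : {set V}), #|S| <= n ->
  (forall x, x \in S -> f x \in S) -> odd (\sum_(x in S) g x) ->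
  exists u, odd (\sum_(y in orbit f u) g y).
Proof.
move=> injf; elim=> [|n IH] S cS clS oS.
  move: cS; rewrite leqn0 cards_eq0 => /eqP S0.
  by move: oS; rewrite S0 big_set0.
have [u uS] : exists u, u \in S.
  apply/set0Pn; apply/negP => /eqP S0; by move: oS; rewrite S0 big_set0.
have clO : forall y, fconnect f u y -> y \in S.
  move=> y /iter_findex <-; elim: (findex f u y) => [|k IHk] /=; [exact: uS | exact: clS].
move: oS; rewrite (bigID (fun x => fconnect f u x)) /= oddD.
case oA: (odd _) => /=.
  move=> _; exists u; move: oA; congr (odd _); apply: eq_bigl => y.
  rewrite -fconnect_orbit; apply/andP/idP => [[]//|h]; split=> //; exact: clO.
move=> oB; apply: (IH (S :\: [set y | fconnect f u y])).
- rewrite -ltnS; apply: leq_trans cS; apply: proper_card.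
  apply/properP; split; first exact: subsetDl.
  by exists u => //; rewrite !inE connect0.
- move=> x; rewrite !inE => /andP[nx xS]; rewrite clS // andbT.
  apply: contra nx => h; apply: connect_trans h _.
  by rewrite fconnect_sym // fconnect1.
- move: oB; congr (odd _); apply: eq_bigl => y; by rewrite !inE andbC.
Qed.

Lemma cycle_const (T : eqType) (e : rel T) (h : T -> bool) (c : seq T) :
  (forall u v, e u v -> h v = h u) -> cycle e c ->
  forall x y, x \in c -> y \in c -> h x = h y.
Proof.
move=> eh; case: c => // x s /= pth.
have gen : forall x0 s0, path e x0 s0 -> forall y, y \in s0 -> h y = h x0.
  move=> x0 s0; elim: s0 x0 => // z s0 IH x0 /= /andP[ez pz] y.
  rewrite inE => /orP[/eqP ->|ys]; first exact: eh.
  by rewrite (IH _ pz _ ys) (eh _ _ ez).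
have all1 : forall y, y \in x :: s -> h y = h x.
  move=> y; rewrite inE => /orP[/eqP -> //|ys].
  by apply: (gen _ _ pth); rewrite mem_rcons inE ys orbT.
by move=> a b /all1 -> /all1 ->.
Qed.

Unset Implicit Arguments.
Set Strict Implicit.

Theorem mainTheorem13 (V : finType) (E M red : {set {set V}}) :
  simple_graph E -> planar E -> bipartite E ->
  perfect_matching E M -> odd #|M :&: red| ->
  ((exists M' : {set {set V}}, perfect_matching E M' /\ ~~ odd #|M' :&: red|)
   <->
   (exists c : seq V, dicycle (Hedge E M) c /\
                      odd (cycle_weight (Hweight E M red) c))).
Proof.
move=> sE _ [side bip] pm oM.
have [sME _] := pm.
have [p [pM pU]] := partner sE pm.
have pK := partner_inv pM pU.
have Eside : forall u v, [set u; v] \in E -> side v = ~~ side u.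
  by move=> u v /bip; case: (side u); case: (side v).
have pside : forall u, side (p u) = ~~ side u.
  by move=> u; apply: Eside; apply: (subsetP sME).
have pbij : bijective p by exists p.
have psideN : forall u, side (p u) != side u by move=> u; rewrite pside; case: (side u).
have HedgeP : forall u v, Hedge E M u v = ([set p u; v] \in E :\: M).
  move=> u v; apply/existsP/idP => [[x /andP[hx hv]]|h].
    by rewrite -(pU _ _ hx).
  by exists (p u); rewrite pM.
have HwE : forall u v, Hweight E M red u v =
    (([set p u; v] \in E :\: M) &&
     (([set u; p u] \in red) != ([set p u; v] \in red)) : nat).
  move=> u v; rewrite /Hweight; case: existsP => [[x /and3P[hx hv hr]]|H].
    by move: hv hr; rewrite -(pU _ _ hx) => -> ->.
  case: (boolP ([set p u; v] \in E :\: M)) => //= hv.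
  case: (boolP (_ != _)) => //= hr; case: H; exists (p u); by rewrite pM hv hr.
have eM : odd #|M :&: red| =
    odd (\sum_(u | side u == false) ([set u; p u] \in red : nat)).
  by rewrite {1}(partner_img sE sME pM pU) (count_red red false pK psideN).
split.
- case=> M' [pm' oM'].
  have [sM'E _] := pm'.
  have [p' [pM' pU']] := partner sE pm'.
  have pK' := partner_inv pM' pU'.
  have p'side : forall u, side (p' u) != side u.
    by move=> u; rewrite (Eside _ _ (subsetP sM'E _ (pM' u))); case: (side u).
  pose f u := p' (p u).
  have injf : injective f.
    by move=> x y /(congr1 p'); rewrite /f !pK' => /(congr1 p); rewrite !pK.
  have eM' : odd #|M' :&: red| =
      odd (\sum_(u | side u == false) ([set p u; f u] \in red : nat)).
    rewrite {1}(partner_img sE sM'E pM' pU') (count_red red true pK' p'side).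
    rewrite (reindex p (onW_bij _ pbij)); congr (odd _); apply: eq_bigl => u.
    by rewrite pside; case: (side u).
  have key : odd (\sum_(u in [set u | side u == false]) Hweight E M red u (f u)).
    rewrite (eq_bigl (fun u => side u == false)); last by move=> u; rewrite inE.
    rewrite odd_sum (eq_bigr (fun u => odd ([set u; p u] \in red : nat) (+)
                          odd ([set p u; f u] \in red : nat))); last first.
      move=> u _; rewrite HwE !oddb; case: (f u =P u) => [fu | nfu].
        have e : [set p u; u] = [set u; p u] by rewrite setUC.
        by rewrite fu e inE pM /= addbb.
      have -> : [set p u; f u] \in E :\: M.
        rewrite inE (subsetP sM'E _ (pM' _)) andbT; apply/negP => /pU.
        by rewrite pK.
      by case: (_ \in red); case: (_ \in red).
    by rewrite big_split /= -!odd_sum -eM -eM' oM (negbTE oM').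
  have clS : forall x, x \in [set u | side u == false] ->
                       f x \in [set u | side u == false].
    move=> x; rewrite !inE /f; have := p'side (p x); rewrite pside.
    by case: (side x); case: (side (p' (p x))).
  have [u ou] := odd_orbit injf (max_card _) clS key.
  set c := orbit f u.
  have Hw0 : forall y, Hweight E M red y y = 0.
    move=> y; rewrite HwE; have e : [set p y; y] = [set y; p y] by rewrite setUC.
    by rewrite e inE pM.
  have nfix : forall y, y \in c -> f y != y.
    move=> y yc; apply/eqP => fy; move: ou; rewrite big1 // => z zc.
    have : fconnect f y z.
      apply: (connect_trans (y := u)).
        by rewrite fconnect_sym // fconnect_orbit.
      by rewrite fconnect_orbit.
    move/iter_findex; rewrite iter_fix // => <-.
    by rewrite fy Hw0.
  exists c; split; last first.
    rewrite /cycle_weight (weight_frel _ (cycle_orbit injf u)) big_uniq //.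
  split.
  - apply/eqP => c0; have := in_orbit f u; by rewrite -/c c0.
  - exact: orbit_uniq.
  - apply: (sub_in_cycle (P := mem c) (e := frel f)); last exact: cycle_orbit.
      move=> x y xc _ /eqP <-; rewrite HedgeP inE (subsetP sM'E _ (pM' _)) andbT.
      apply/negP => /pU; rewrite pK => e.
      by have := nfix _ xc; rewrite e eqxx.
    by apply/allP.
- case=> c [[cn cu cc] cw].
  have [x0 x0c] : exists x0, x0 \in c.
    by case: (c) cn => // x s _; exists x; exact: mem_head.
  have hside : forall u v, Hedge E M u v -> side v = side u.
    move=> u v; rewrite HedgeP inE => /andP[_ /Eside]; by rewrite pside negbK.
  have cside : forall u, u \in c -> side u = side x0.
    by move=> u uc; exact: (cycle_const hside cc uc x0c).
  pose q w := if w \in c then p (prev c w)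
              else if p w \in c then next c (p w) else p w.
  have pnc : forall w, w \in c -> (p w \in c) = false.
    move=> w wc; apply/negP => /cside; rewrite pside (cside _ wc).
    by case: (side x0).
  have q1 : forall w, w \in c -> q w = p (prev c w) by move=> w wc; rewrite /q wc.
  have q2 : forall w, w \notin c -> p w \in c -> q w = next c (p w).
    by move=> w /negbTE wc pwc; rewrite /q wc pwc.
  have q3 : forall w, w \notin c -> p w \notin c -> q w = p w.
    by move=> w /negbTE wc /negbTE pwc; rewrite /q wc pwc.
  have qK : forall w, q (q w) = w.
    move=> w; case: (boolP (w \in c)) => wc.
      have pc : prev c w \in c by rewrite mem_prev.
      have h1 : p (prev c w) \notin c by rewrite pnc.
      have h2 : p (p (prev c w)) \in c by rewrite pK.
      by rewrite (q1 _ wc) (q2 _ h1 h2) pK next_prev.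
    case: (boolP (p w \in c)) => pwc.
      have nc : next c (p w) \in c by rewrite mem_next.
      by rewrite (q2 _ wc pwc) (q1 _ nc) prev_next // pK.
    have h2 : p (p w) \notin c by rewrite pK.
    by rewrite (q3 _ wc pwc) (q3 _ pwc h2) pK.
  have qE : forall w, [set w; q w] \in E.
    move=> w; case: (boolP (w \in c)) => wc.
      move: (prev_cycle cc wc); rewrite HedgeP inE => /andP[_ h].
      by rewrite (q1 _ wc) setUC.
    case: (boolP (p w \in c)) => pwc.
      move: (next_cycle cc pwc); rewrite HedgeP inE pK => /andP[_ h].
      by rewrite (q2 _ wc pwc).
    rewrite (q3 _ wc pwc); exact: (subsetP sME _ (pM w)).
  pose M' := [set [set w; q w] | w : V].
  have qsideN : forall w, side (q w) != side w.
    by move=> w; rewrite (Eside _ _ (qE w)); case: (side w).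
  exists M'; split.
    split.
      by apply/subsetP => f /imsetP[w _ ->]; exact: qE.
    move=> v; apply/eqP/cards1P; exists [set v; q v]; apply/setP => f; rewrite !inE.
    apply/andP/eqP => [[/imsetP[w _ ->] /set2P[->|->]] //|->].
      by rewrite qK setUC.
    by split; [apply/imsetP; exists v | exact: set21].
  have RI : forall F : V -> nat,
      \sum_(x | (side x == ~~ side x0) && (p x \in c)) F x = \sum_(u <- c) F (p u).
    move=> F; rewrite (reindex p (onW_bij _ pbij)) big_uniq //; apply: eq_bigl => u.
    rewrite pK pside; case: (boolP (u \in c)) => uc.
      by rewrite (cside _ uc) eqxx.
    by rewrite andbF.
  have eM2 : #|M :&: red| = \sum_(u <- c) ([set p u; u] \in red : nat) +
      \sum_(x | (side x == ~~ side x0) && ~~ (p x \in c)) ([set x; p x] \in red : nat).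
    rewrite {1}(partner_img sE sME pM pU) (count_red red (~~ side x0) pK psideN).
    rewrite (bigID (fun x => p x \in c)) /= RI; congr (_ + _).
    by apply: eq_bigr => u _; rewrite pK.
  have eM'2 : #|M' :&: red| = \sum_(u <- c) ([set p u; next c u] \in red : nat) +
      \sum_(x | (side x == ~~ side x0) && ~~ (p x \in c)) ([set x; p x] \in red : nat).
    rewrite (count_red red (~~ side x0) qK qsideN).
    rewrite (bigID (fun x => p x \in c)) /= RI; congr (_ + _).
      rewrite [LHS]big_seq [RHS]big_seq; apply: eq_bigr => u uc.
      have h1 : p u \notin c by rewrite pnc.
      have h2 : p (p u) \in c by rewrite pK.
      by rewrite (q2 _ h1 h2) pK.
    apply: eq_bigr => x /andP[sx npx].
    have xc : x \notin c.
      apply/negP => /cside e; move: sx; rewrite e; by case: (side x0).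
    by rewrite (q3 _ xc npx).
  have eW : odd (cycle_weight (Hweight E M red) c) =
      odd (\sum_(u <- c) ([set p u; u] \in red : nat)) (+)
      odd (\sum_(u <- c) ([set p u; next c u] \in red : nat)).
    rewrite /cycle_weight (weight_frel _ (cycle_next cu)) big_seq odd_sum.
    rewrite (eq_bigr (fun u => odd ([set p u; u] \in red : nat) (+)
                              odd ([set p u; next c u] \in red : nat))); last first.
      move=> u uc; have := next_cycle cc uc; rewrite HedgeP => h.
      rewrite HwE h /= !oddb (setUC [set u]).
      by case: (_ \in red); case: (_ \in red).
    by rewrite big_split -!odd_sum -!big_seq.
  rewrite eM'2 oddD; move: oM cw; rewrite eM2 eW oddD.
  case: (odd (\sum_(u <- c) ([set p u; u] \in red : nat))).
  all: case: (odd (\sum_(u <- c) ([set p u; next c u] \in red : nat))).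
  all: by case: (odd (\sum_(x | _) _)).
Qed.
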